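(* Let $g:\mathbb{R}^n\to\mathbb{R}\cup\{+\infty\}$ be a proper closed convex function and let $f=f_1-f_2$, where $f_1,f_2:\mathbb{R}^n\to\mathbb{R}$ are convex differentiable functions such that $\nabla f_1$ is Lipschitz continuous with modulus $L>0$, $\nabla f_2$ is Lipschitz continuous with modulus $l\ge 0$, and $L\ge l$. Let $F=f+g$, and assume $\inf F>-\infty$ and that this infimum is attained. Let $\{x^k\}$ be generated by Algorithm 1 (described in the context) with $\bar\beta:=\sup_k\beta_k<\sqrt{L/(L+l)}$, and let $\Omega$ be the set of accumulation points of $\{x^k\}$. Then $\zeta:=\lim_{k\to\infty}F(x^k)$ exists and $F\equiv\zeta$ on $\Omega$.
   Context: For a proper closed convex $h$, $\mathrm{Prox}_h(v)=\arg\min_{x\in\mathbb{R}^n}\{h(x)+\tfrac12\|x-v\|^2\}$. Algorithm 1 (proximal gradient algorithm with extrapolation): choose $x^0\in\operatorname{dom} g$ and $\{\beta_k\}\subseteq[0,\sqrt{L/(L+l)}]$, set $x^{-1}=x^0$, and for $k=0,1,2,\dots$ set $y^k=x^k+\beta_k(x^k-x^{k-1})$ and $x^{k+1}=\mathrm{Prox}_{\frac1L g}\big(y^k-\tfrac1L\nabla f(y^k)\big)$. *)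

(* Defs.v *)
From HB Require Import structures.
From mathcomp Require Import all_boot all_order all_algebra.
From mathcomp Require Import all_classical all_reals all_analysis.
Set Implicit Arguments. Unset Strict Implicit. Unset Printing Implicit Defensive.
Import Order.TTheory GRing.Theory Num.Theory.
Import numFieldNormedType.Exports.
Local Open Scope classical_set_scope.
Local Open Scope ring_scope.

Section Defs.
Variables (R : realType) (n : nat).
Local Notation V := 'rV[R]_n.

Definition dotv (u v : V) : R := \sum_(i < n) u ord0 i * v ord0 i.
Definition enorm (u : V) : R := Num.sqrt (dotv u u).

Definition is_gradient (f : V -> R) (G : V -> V) : Prop :=
  forall x, differentiable f x /\ forall h, 'd f x h = dotv (G x) h.

Definition lipschitz_with (G : V -> V) (L : R) : Prop :=
  forall x y, enorm (G x - G y) <= L * enorm (x - y).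

Definition convex_fun (f : V -> R) : Prop :=
  forall (x y : V) (t : R), 0 <= t -> t <= 1 ->
    f (t *: x + (1 - t) *: y) <= t * f x + (1 - t) * f y.

Definition proper_fun (g : V -> \bar R) : Prop :=
  (forall x, -oo < g x)%E /\ (exists x, g x < +oo)%E.

Definition closed_fun (g : V -> \bar R) : Prop :=
  closed [set p : V * R | (g p.1 <= p.2%:E)%E].

Definition convex_efun (g : V -> \bar R) : Prop :=
  forall (x y : V) (t : R), 0 < t -> t < 1 ->
    (g (t *: x + (1 - t) *: y)%R <= t%:E * g x + (1 - t)%:E * g y)%E.

(* p is a minimizer of  h(z) + 1/2 ||z - v||^2,  i.e. p = Prox_h(v)
   (the minimizer is unique for proper closed convex h), here with h = c * g *)
Definition is_prox_scaled (c : R) (g : V -> \bar R) (v p : V) : Prop :=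
  forall z, (c%:E * g p + (2^-1 * enorm (p - v) ^+ 2)%:E
             <= c%:E * g z + (2^-1 * enorm (z - v) ^+ 2)%:E)%E.

(* extrapolated point y^k = x^k + beta_k (x^k - x^{k-1}), with x^{-1} = x^0
   (for k = 0, k.-1 = 0 so y^0 = x^0) *)
Definition extrap (x : nat -> V) (beta : nat -> R) (k : nat) : V :=
  x k + beta k *: (x k - x k.-1).

Definition algorithm1 (g : V -> \bar R) (gradf : V -> V) (L l : R)
    (beta : nat -> R) (x : nat -> V) : Prop :=
  (g (x 0%N) < +oo)%E /\
  (forall k, 0 <= beta k <= Num.sqrt (L / (L + l))) /\
  (forall k, is_prox_scaled L^-1 g
               (extrap x beta k - L^-1 *: gradf (extrap x beta k)) (x k.+1)).
End Defs.

(* Main.v *)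
Require Import Defs.
From HB Require Import structures.
From mathcomp Require Import all_boot all_order all_algebra.
From mathcomp Require Import all_classical all_reals all_analysis.
From mathcomp Require Import ring lra.
Import Order.TTheory GRing.Theory Num.Theory.
Import numFieldNormedType.Exports.
Local Open Scope classical_set_scope.
Local Open Scope ring_scope.

Module Helpers.
Set Implicit Arguments. Unset Strict Implicit.



Section Dot.
Variables (R : realType) (n : nat).
Local Notation V := 'rV[R]_n.
Implicit Types u v w : V.

Lemma dotvC u v : dotv u v = dotv v u.
Proof. by apply: eq_bigr => i _; rewrite mulrC. Qed.

Lemma dotvDl u v w : dotv (u + v) w = dotv u w + dotv v w.
Proof. by rewrite /dotv -big_split; apply: eq_bigr => i _; rewrite mxE mulrDl. Qed.

Lemma dotvZl (a : R) u w : dotv (a *: u) w = a * dotv u w.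
Proof. by rewrite /dotv mulr_sumr; apply: eq_bigr => i _; rewrite mxE mulrA. Qed.

Lemma dotvNl u w : dotv (- u) w = - dotv u w.
Proof. by rewrite -scaleN1r dotvZl mulN1r. Qed.

Lemma dotvBl u v w : dotv (u - v) w = dotv u w - dotv v w.
Proof. by rewrite dotvDl dotvNl. Qed.

Lemma dotvDr u v w : dotv w (u + v) = dotv w u + dotv w v.
Proof. by rewrite dotvC dotvDl !(dotvC w). Qed.
Lemma dotvZr (a : R) u w : dotv w (a *: u) = a * dotv w u.
Proof. by rewrite dotvC dotvZl dotvC. Qed.
Lemma dotvNr u w : dotv w (- u) = - dotv w u.
Proof. by rewrite dotvC dotvNl dotvC. Qed.
Lemma dotvBr u v w : dotv w (u - v) = dotv w u - dotv w v.
Proof. by rewrite dotvDr dotvNr. Qed.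

Lemma dotv0l w : dotv 0 w = 0.
Proof. by rewrite /dotv big1 // => i _; rewrite mxE mul0r. Qed.

Lemma dotv_ge0 u : 0 <= dotv u u.
Proof. by apply: sumr_ge0 => i _; rewrite -expr2 sqr_ge0. Qed.

Lemma dotv_eq0 u : dotv u u = 0 -> u = 0.
Proof.
move=> /eqP; rewrite psumr_eq0; last by move=> i _; rewrite -expr2 sqr_ge0.
move=> /allP H; apply/rowP => i; rewrite mxE.
by have := H i (mem_index_enum i); rewrite -expr2 sqrf_eq0 => /eqP.
Qed.

Lemma enorm_ge0 u : 0 <= enorm u.
Proof. exact: sqrtr_ge0. Qed.

Lemma enorm_sq u : enorm u ^+ 2 = dotv u u.
Proof. by rewrite /enorm sqr_sqrtr // dotv_ge0. Qed.


Lemma dotv_expand u v : dotv (u + v) (u + v) = dotv u u + 2 * dotv u v + dotv v v.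
Proof. rewrite dotvDl !dotvDr (dotvC v u); ring. Qed.

Lemma dotv_expandB u v : dotv (u - v) (u - v) = dotv u u - 2 * dotv u v + dotv v v.
Proof. rewrite dotv_expand dotvNr dotvNl dotvNr opprK; ring. Qed.

Lemma enorm_eq0 u : enorm u = 0 -> u = 0.
Proof. by move=> h; apply: dotv_eq0; rewrite -enorm_sq h expr0n. Qed.

Lemma CS u v : dotv u v <= enorm u * enorm v.
Proof.
set a := enorm u; set c := enorm v.
have ha : 0 <= a by exact: enorm_ge0.
have hc : 0 <= c by exact: enorm_ge0.
have := dotv_ge0 (c *: u - a *: v).
rewrite dotv_expandB !dotvZl !dotvZr -!enorm_sq -/a -/c => H.
have [ac0|] := eqVneq (a * c) 0.
  move: ac0 => /eqP; rewrite mulf_eq0 => /orP[]/eqP h.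
    by rewrite (enorm_eq0 h) dotv0l h mul0r.
  by rewrite dotvC (enorm_eq0 h) dotv0l h mulr0.
move=> hne.
have hpos : 0 < a * c by rewrite lt_def hne mulr_ge0.
have : 2 * (a * c) * dotv u v <= 2 * (a * c) * (a * c) by nra.
move=> h2; have h3 : 0 < 2 * (a * c) by rewrite mulr_gt0.
by rewrite -(ler_pM2l h3).
Qed.

Lemma sqr_le_le (a b : R) : 0 <= b -> a ^+ 2 <= b ^+ 2 -> a <= b.
Proof. move=> hb h; nra. Qed.

Lemma enormD u v : enorm (u + v) <= enorm u + enorm v.
Proof.
apply: sqr_le_le; first by rewrite addr_ge0 ?enorm_ge0.
rewrite enorm_sq dotv_expand -!enorm_sq.
have := CS u v; nra.
Qed.

Lemma enormZ (a : R) u : enorm (a *: u) = `|a| * enorm u.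
Proof.
rewrite /enorm dotvZl dotvZr mulrA -expr2 sqrtrM ?sqr_ge0 //.
by rewrite sqrtr_sqr.
Qed.

Lemma enormN u : enorm (- u) = enorm u.
Proof. by rewrite -scaleN1r enormZ normrN normr1 mul1r. Qed.

Lemma enormB u v : enorm (u - v) = enorm (v - u).
Proof. by rewrite -enormN opprB. Qed.

Lemma entry_le_enorm u i : `|u ord0 i| <= enorm u.
Proof.
apply: sqr_le_le; first exact: enorm_ge0.
rewrite enorm_sq /dotv real_normK ?num_real // (bigD1 i) //= -expr2 lerDl.
by apply: sumr_ge0 => j _; rewrite -expr2 sqr_ge0.
Qed.

Lemma entry_le_norm u i : `|u ord0 i| <= `|u|.
Proof.
have /mapP[j Hj ->] : `|u ord0 i| \in [seq `|u x.1 x.2| | x : 'I_1 * 'I_n].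
  by apply/mapP; exists (ord0, i) => //=; rewrite mem_enum.
by rewrite [leRHS]/Num.Def.normr /= mx_normrE; apply/bigmax_geP; right => /=; exists j.
Qed.

Lemma norm_le_enorm u : `|u| <= enorm u.
Proof.
rewrite [leLHS]/Num.Def.normr /= mx_normrE; apply/bigmax_leP; split; first exact: enorm_ge0.
by move=> [i j] _ /=; rewrite [i]ord1; exact: entry_le_enorm.
Qed.

Lemma enorm_le_norm u : enorm u <= n.+1%:R * `|u|.
Proof.
apply: sqr_le_le; first by rewrite mulr_ge0.
rewrite enorm_sq /dotv.
apply: le_trans (_ : \sum_(i < n) `|u|^+2 <= _).
  apply: ler_sum => i _; rewrite -expr2 -real_normK ?num_real //.
  by rewrite lerXn2r ?nnegrE // entry_le_norm.
rewrite sumr_const card_ord -mulr_natl exprMn.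
have := normr_ge0 u; have : n%:R <= n.+1%:R ^+ 2 :> R.
  by rewrite -natrX ler_nat expnS expn1 (leq_trans (leqnSn n)) // leq_pmulr.
nra.
Qed.

End Dot.

Section Tri.
Variables (R : realType) (n : nat).
Lemma enorm_tri (u v w : 'rV[R]_n) : enorm (u - w) <= enorm (u - v) + enorm (v - w).
Proof. by apply: le_trans (enormD _ _); rewrite addrA subrK. Qed.
Lemma enormBle (u v : 'rV[R]_n) : enorm (u - v) <= enorm u + enorm v.
Proof. by have := enormD u (- v); rewrite enormN. Qed.
End Tri.



Section Calc.
Variables (R : realType) (n : nat).
Local Notation V := 'rV[R]_n.

Lemma line_derive (f : V -> R) G (x d : V) (t : R) : is_gradient f G ->
  is_derive t 1 (fun s => f (x + s *: d)) (dotv (G (x + t *: d)) d).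
Proof.
move=> hG.
have E : (fun h : R => h^-1 *: (((fun s => f (x + s *: d)) \o shift t) (h *: 1)
               - f (x + t *: d))) =
         (fun h : R => h^-1 *: ((f \o shift (x + t *: d)) (h *: d) - f (x + t *: d))).
  apply: funext => h /=; congr (_ *: (f _ - _)).
  by rewrite /shift /= [h%:A]mulr1 scalerDl addrCA addrA.
have [hd hdv] := hG (x + t *: d).
split.
  by rewrite /derivable E; exact: diff_derivable.
by rewrite /derive E -/(derive f (x + t *: d) d) deriveE.
Qed.


Lemma lin_derive (a t : R) : is_derive t 1 (fun s : R => s * a) a.
Proof.
have -> : (fun s : R => s * a) = (a \*: (@id R)).
  by apply: funext => s /=; rewrite mulrC.
by apply: is_derive_eq; rewrite /GRing.scale /= mulr1.
Qed.

Lemma sq_derive (b t : R) : is_derive t 1 (fun s : R => b * s ^+ 2) (b * (2 * t)).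
Proof.
have -> : (fun s : R => b * s ^+ 2) = (b \*: ((@id R) ^+ 2)).
  by apply: funext => s /=; rewrite /GRing.scale /= expr2.
by apply: is_derive_eq; rewrite /GRing.scale /= expr1 mulr1.
Qed.


Lemma descent_up (f : V -> R) G M : is_gradient f G -> lipschitz_with G M ->
  forall x y, f y <= f x + dotv (G x) (y - x) + M / 2 * enorm (y - x) ^+ 2.
Proof.
move=> hG hL x y.
set d := y - x; set a := dotv (G x) d; set b := M / 2 * enorm d ^+ 2.
pose phi := fun s : R => f (x + s *: d) - s * a - b * s ^+ 2.
have Dphi (t : R) : is_derive t 1 phi (dotv (G (x + t *: d)) d - a - b * (2 * t)).
  have -> : phi = ((fun s => f (x + s *: d)) - (fun s => s * a)) - (fun s => b * s ^+ 2).
    by apply: funext.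
  have := is_deriveB (is_deriveB (line_derive x d t hG) (lin_derive a t)) (sq_derive b t). exact.
have [c hc E] := @MVT R phi (fun t => dotv (G (x + t *: d)) d - a - b * (2 * t)) 0 1
   ltr01 (fun t _ => Dphi t)
   (derivable_within_continuous (fun t _ => @ex_derive _ _ _ _ _ _ _ (Dphi t))).
move: hc; rewrite in_itv /= => /andP[c0 c1].
have Hle : dotv (G (x + c *: d)) d - a <= b * (2 * c).
  rewrite /a -dotvBl.
  apply: le_trans (CS _ _) _.
  have := hL (x + c *: d) x; rewrite addrAC subrr add0r enormZ gtr0_norm // => hl.
  have hd := enorm_ge0 d.
  have hg := enorm_ge0 (G (x + c *: d) - G x).
  rewrite /b; nra.
move: E; rewrite /phi /= scale1r scale0r addr0 subr0 mul0r subr0 expr0n /= mulr0 subr0.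
rewrite mul1r expr1n !mulr1 [x + d]addrC /d subrK -/d.
lra.
Qed.


Lemma gradN (f : V -> R) G : is_gradient f G -> is_gradient (fun z => - f z) (fun z => - G z).
Proof.
move=> hG z; have [hd hv] := hG z.
have -> : (fun z => - f z) = - f by [].
split; first exact: differentiableN.
by move=> h; rewrite diffN // -[LHS]/(- ('d f z h)) hv dotvNl.
Qed.

Lemma descent_low (f : V -> R) G M : is_gradient f G -> lipschitz_with G M ->
  forall x y, f x + dotv (G x) (y - x) - M / 2 * enorm (y - x) ^+ 2 <= f y.
Proof.
move=> hG hL x y.
have hL' : lipschitz_with (fun z => - G z) M.
  by move=> u v; rewrite -opprD enormN; exact: hL.
have := descent_up (gradN hG) hL' x y; rewrite dotvNl; lra.
Qed.


Lemma conv_comb (x y : V) (h : R) : h *: y + (1 - h) *: x = x + h *: (y - x).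
Proof. by rewrite scalerBl scale1r scalerBr addrCA. Qed.

Lemma convex_low (f : V -> R) G M : is_gradient f G -> lipschitz_with G M ->
  0 <= M -> convex_fun f -> forall x y, f x + dotv (G x) (y - x) <= f y.
Proof.
move=> hG hL hM hc x y.
set d := y - x; set a := dotv (G x) d; set K := M / 2 * enorm d ^+ 2.
have hK : 0 <= K by rewrite /K mulr_ge0 ?divr_ge0 ?exprn_ge0 ?enorm_ge0.
have key h : 0 < h -> h <= 1 -> h * a - h ^+ 2 * K <= h * (f y - f x).
  move=> h0 h1.
  have c1 := hc y x h (ltW h0) h1; rewrite conv_comb -/d in c1.
  have c2 := descent_low hG hL x (x + h *: d).
  rewrite [x + _]addrC addrK dotvZr enormZ gtr0_norm // in c2.
  rewrite [h *: d + x]addrC exprMn in c2; rewrite -/a in c2; rewrite /K; lra.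
rewrite -lerBrDl; rewrite leNgt; apply/negP => hlt.
set D := f y - f x in hlt key.
set q := a - D + 2 * K + 1.
have hq : 0 < q by rewrite /q; lra.
set h := (a - D) / q.
have hqh : h * q = a - D by rewrite /h mulfVK // gt_eqF.
have h0 : 0 < h by rewrite /h divr_gt0 // subr_gt0.
have h1 : h <= 1 by rewrite /h ler_pdivrMr // mul1r /q; lra.
have := key h h0 h1.
have : h * (2 * K) < a - D.
  have e : h * (2 * K) = (a - D) - h * (a - D) - h.
    by rewrite -[X in X - _ - _]hqh /q; ring.
  rewrite e; have : 0 < a - D by lra.
  nra.
nra.
Qed.


Lemma small_lim (A B C : R) : 0 <= C -> (forall t, 0 < t -> t < 1 -> A <= B + t * C) -> A <= B.
Proof.
move=> hC H; rewrite leNgt; apply/negP => hlt.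
set q := A - B + C + 1.
have hq : 0 < q by rewrite /q; lra.
set t := (A - B) / q.
have hqt : t * q = A - B by rewrite /t mulfVK // gt_eqF.
have t0 : 0 < t by rewrite /t divr_gt0 // subr_gt0.
have t1 : t < 1 by rewrite /t ltr_pdivrMr // mul1r /q; lra.
have := H t t0 t1.
have e : t * C = (A - B) - t * (A - B) - t.
  by rewrite -[X in X - _ - _]hqt /q; ring.
rewrite e; have : 0 < A - B by lra.
nra.
Qed.

Local Open Scope ereal_scope.
Lemma efin_bound (e : \bar R) (c r s : R) : (0 < c)%R -> -oo < e ->
  c%:E * e + r%:E <= s%:E -> exists x, e = x%:E /\ (c * x + r <= s)%R.
Proof.
move=> c0; case: e => [x| |] // _.
  by rewrite -EFinM -EFinD lee_fin => h; exists x.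
by rewrite mulry gtr0_sg // mul1e addye.
Qed.

Lemma efin_le (e : \bar R) (s : R) : -oo < e -> e <= s%:E -> exists x, e = x%:E /\ (x <= s)%R.
Proof. by case: e => [x| |] // _; rewrite lee_fin => h; exists x. Qed.

Lemma prox_var (c : R) (g : V -> \bar R) (v p z : V) (gz : R) :
  (0 < c)%R -> (forall x, -oo < g x) -> convex_efun g -> is_prox_scaled c g v p ->
  g z = gz%:E ->
  exists gp : R, g p = gp%:E /\
    (c * gp <= c * gz + dotv (p - v) (z - p))%R.
Proof.
move=> c0 gpr gcv hp gzE.
have hpz := hp z; rewrite gzE -EFinM -EFinD in hpz.
have [gp [Ep _]] := efin_bound c0 (gpr p) hpz.
exists gp; split => //.
pose K := (enorm (z - p) ^+ 2 / 2)%R.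
apply: (@small_lim _ _ K); first by rewrite /K divr_ge0 ?exprn_ge0 ?enorm_ge0.
move=> t t0 t1.
have hcv := gcv z p t t0 t1; rewrite gzE Ep -!EFinM -EFinD in hcv.
have hpt := hp (t *: z + (1 - t) *: p)%R; rewrite Ep -EFinM -EFinD in hpt.
have [gt [Et _]] := efin_le (gpr (t *: z + (1 - t) *: p)%R) hcv.
rewrite Et lee_fin in hcv; rewrite Et -EFinM -EFinD lee_fin in hpt.
rewrite conv_comb addrAC in hpt; set w := (p - v)%R in hpt *.
rewrite !enorm_sq [dotv (w + _) _]dotv_expand dotvZl !dotvZr in hpt.
have hc2 := ler_wpM2l (ltW c0) hcv.
rewrite /K enorm_sq.
set A := dotv w w in hpt *.
set B := dotv w (z - p) in hpt *.
set C := dotv (z - p) (z - p) in hpt *.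
have : (t * (c * gp - c * gz - B - t * (C / 2)) <= 0)%R by nra.
rewrite pmulr_rle0 //; lra.
Qed.

End Calc.



Section Step.
Variables (R : realType) (n : nat).
Local Notation V := 'rV[R]_n.

Lemma step (g : V -> \bar R) (f1 f2 : V -> R) (G1 G2 : V -> V) (L l : R)
  (x y p : V) (gx : R) :
  (forall z, (-oo < g z)%E) -> convex_efun g ->
  convex_fun f1 -> convex_fun f2 -> is_gradient f1 G1 -> is_gradient f2 G2 ->
  0 < L -> 0 <= l -> lipschitz_with G1 L -> lipschitz_with G2 l ->
  is_prox_scaled L^-1 g (y - L^-1 *: (G1 y - G2 y)) p ->
  g x = gx%:E ->
  exists gp, g p = gp%:E /\
    f1 p - f2 p + gp + L / 2 * enorm (x - p) ^+ 2 <=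
    f1 x - f2 x + gx + (L + l) / 2 * enorm (x - y) ^+ 2.
Proof.
move=> gpr gcv c1 c2 hG1 hG2 L0 l0 hL1 hL2 hp gxE.
have Li : 0 < L^-1 by rewrite invr_gt0.
have [gp [gpE hv]] := prox_var Li gpr gcv hp gxE.
exists gp; split => //.
set d := G1 y - G2 y in hv.
have e1 := descent_up hG1 hL1 y p.
have e2 := convex_low hG2 hL2 l0 c2 y p.
have e3 := convex_low hG1 hL1 (ltW L0) c1 y x.
have e4 := descent_up hG2 hL2 y x.
set a := p - y in e1 e2 hv *.
set b := x - p in hv *.
have Ex : x - y = b + a by rewrite /a /b addrA subrK.
have Ev : p - (y - L^-1 *: d) = a + L^-1 *: d.
  by rewrite opprB addrCA addrC.
rewrite Ex in e3 e4 *; rewrite Ev in hv.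
clearbody a b.
have hv' : gp <= gx + L * dotv (a + L^-1 *: d) b.
  have := ler_wpM2l (ltW L0) hv; rewrite !mulrDr !mulrA divff ?gt_eqF // !mul1r.
  by [].
rewrite dotvDl dotvZl mulrDr mulrA divff ?gt_eqF // mul1r in hv'.
rewrite /d dotvBl (dotvC a b) in hv'.
rewrite !enorm_sq dotv_expand in e1 e4 *.
rewrite !dotvDr in e3 e4.
lra.
Qed.

End Step.



Section Topo.
Variables (R : realType) (n : nat).
Local Notation V := 'rV[R]_n.

Lemma nb_enorm (w : V) (U : set V) : nbhs w U ->
  exists2 r : R, 0 < r & forall z, enorm (z - w) < r -> U z.
Proof.
move=> /nbhs_ballP [r r0 hr]; exists r => // z hz; apply: hr.
rewrite -ball_normE /ball_ /=.
by apply: le_lt_trans (norm_le_enorm _) _; rewrite enormB.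
Qed.

Lemma cl_enorm (x : nat -> V) w : cluster (x @ \oo) w ->
  forall N (r : R), 0 < r -> exists k, (N <= k)%N /\ enorm (x k - w) < r.
Proof.
move=> hw N r r0.
have hn : 0 < n.+1%:R :> R by rewrite ltr0n.
have := hw [set z | exists k, (N <= k)%N /\ z = x k] (ball w (r / n.+1%:R)).
case.
- exists N => // k /= hk; by exists k.
- by apply: nbhsx_ballx; rewrite divr_gt0.
move=> z [[k [hk ->]] hb]; exists k; split => //.
move: hb; rewrite -ball_normE /ball_ /= => hb.
apply: le_lt_trans (enorm_le_norm _) _.
by rewrite -normrN opprB -ltr_pdivlMl // mulrC.
Qed.

Lemma cont_enorm (f : V -> R) (w : V) : {for w, continuous f} ->
  forall e : R, 0 < e -> exists2 dd : R, 0 < dd &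
    forall z, enorm (z - w) < dd -> `|f w - f z| < e.
Proof.
move=> hc e e0.
have /cvgrPdist_lt := hc; move=> /(_ e e0).
move=> H; have [dd dd0 Hd] := nb_enorm H; exists dd => // z hz; exact: Hd.
Qed.

End Topo.

End Helpers.
Import Helpers.


Theorem proposition3p5 (R : realType) (n : nat)
  (g : 'rV[R]_n -> \bar R) (f1 f2 : 'rV[R]_n -> R) (G1 G2 : 'rV[R]_n -> 'rV[R]_n)
  (L l : R) (beta : nat -> R) (x : nat -> 'rV[R]_n) :
  proper_fun g -> closed_fun g -> convex_efun g ->
  convex_fun f1 -> convex_fun f2 ->
  is_gradient f1 G1 -> is_gradient f2 G2 ->
  0 < L -> 0 <= l -> l <= L ->
  lipschitz_with G1 L -> lipschitz_with G2 l ->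
  let F := fun z => ((f1 z - f2 z)%:E + g z)%E in
  (-oo < ereal_inf (range F))%E ->
  (exists xs, forall z, (F xs <= F z)%E) ->
  algorithm1 g (fun z => G1 z - G2 z) L l beta x ->
  sup (range beta) < Num.sqrt (L / (L + l)) ->
  exists zeta : R,
    (F \o x @ \oo --> zeta%:E) /\
    (forall w, cluster (x @ \oo) w -> F w = zeta%:E).
Proof.
move=> gprop gcl gcv c1 c2 hG1 hG2 L0 l0 lL hL1 hL2 F Finf [xs hxs] [gx0 [hbeta hprox]] hsup.
have gpr := gprop.1.
have gfin : forall k, exists r, g (x k) = r%:E.
  elim=> [|k [r hr]].
    exists (fine (g (x 0%N))); rewrite fineK //.
    by apply/fin_numPlt; rewrite gpr gx0.
  have [gp [hp _]] := step gpr gcv c1 c2 hG1 hG2 L0 l0 hL1 hL2 (hprox k) hr.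
  by exists gp.
pose gv k := fine (g (x k)).
have gE k : g (x k) = (gv k)%:E by have [r hr] := gfin k; rewrite /gv hr.
pose Fr k := f1 (x k) - f2 (x k) + gv k.
have FE k : F (x k) = (Fr k)%:E by rewrite /F gE.
pose D k := enorm (x k - x k.-1) ^+ 2.
have D0 k : 0 <= D k by rewrite /D exprn_ge0 ?enorm_ge0.
set s := Num.sqrt (L / (L + l)) in hbeta hsup.
set bb := sup (range beta) in hsup.
have hub : has_ubound (range beta) by exists s => _ [k _ <-]; case/andP: (hbeta k).
have hb k : 0 <= beta k <= bb.
  by case/andP: (hbeta k) => -> _; apply: ub_le_sup => //; exists k.
have Lpos : 0 < L + l by lra.
have s2 : s ^+ 2 = L / (L + l) by rewrite /s sqr_sqrtr // divr_ge0 // ltW.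
have bb0 : 0 <= bb by case/andP: (hb 0%N) => h1 h2; exact: le_trans h2.
have hbb : (L + l) * bb ^+ 2 < L.
  have : bb ^+ 2 < s ^+ 2 by rewrite ltrXn2r // ?nnegrE // (le_trans bb0) // ltW.
  rewrite s2 ltr_pdivlMr // => h; lra.
set dl := (L - (L + l) * bb ^+ 2) / 2.
have dl0 : 0 < dl by rewrite /dl divr_gt0 // subr_gt0.
have desc k : Fr k.+1 + L / 2 * D k.+1 <= Fr k + L / 2 * D k - dl * D k.
  have [gp [hgp H]] := step gpr gcv c1 c2 hG1 hG2 L0 l0 hL1 hL2 (hprox k) (gE k).
  have egp : gp = gv k.+1 by rewrite /gv hgp.
  rewrite /extrap opprD addrA subrr add0r enormN enormZ exprMn -/(D k) enormB -/(D k.+1) in H.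
  rewrite real_normK ?num_real // egp in H.
  case/andP: (hb k) => b0 b1.
  have : beta k ^+ 2 * D k <= bb ^+ 2 * D k.
    by rewrite ler_wpM2r // lerXn2r // nnegrE.
  rewrite /Fr /dl; nra.
have [m hm] : exists m, forall k, m <= Fr k.
  have := hxs (x 0%N); rewrite FE /F.
  case Eg: (g xs) => [r| |] //.
    by move=> _; exists (f1 xs - f2 xs + r) => k; have := hxs (x k); rewrite FE /F Eg.
  by have := gpr xs; rewrite Eg.
pose E k := Fr k + L / 2 * D k.
have Edec : nonincreasing_seq E.
  apply/nonincreasing_seqP => k; have := desc k; have := D0 k; rewrite /E; nra.
have Elb : has_lbound (range E).
  exists m => _ [k _ <-]; have := hm k; have := D0 k; rewrite /E; nra.
have Ecvg := nonincreasing_cvgn Edec Elb.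
set zeta := inf _ in Ecvg.
have Dcvg : D @ \oo --> 0.
  apply: (@squeeze_cvgr _ _ _ _ (fun=> 0) (fun k => dl^-1 * (E k - E k.+1))).
  - by near=> k; rewrite D0 /= ler_pdivlMl //; have := desc k; rewrite /E; lra.
  - exact: cvg_cst.
  - have -> : 0 = dl^-1 * (zeta - zeta) by rewrite subrr mulr0.
    apply: cvgMl_tmp; apply: cvgB => //.
    by rewrite cvg_shiftS.
have Frcvg : Fr @ \oo --> zeta.
  have -> : Fr = E - (fun k => L / 2 * D k) by apply: funext => k; rewrite /E /= addrK.
  rewrite -[zeta]subr0; apply: cvgB => //.
  by rewrite -(mulr0 (L / 2)); apply: cvgMl_tmp.
exists zeta; split.
  apply: cvg_EFin; first by near=> k; rewrite /= FE.
  by have -> : fine \o (F \o x) = Fr by apply: funext => k /=; rewrite FE.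
move=> w hw.
pose f z := f1 z - f2 z.
have hf1 := differentiable_continuous (hG1 w).1.
have hf2 := differentiable_continuous (hG2 w).1.
have fcont e : 0 < e -> exists2 dd, 0 < dd &
    forall z, enorm (z - w) < dd -> `|f w - f z| < e.
  move=> e0; have e20 : 0 < e / 2 by rewrite divr_gt0.
  have [d1 d10 H1] := cont_enorm hf1 e20.
  have [d2 d20 H2] := cont_enorm hf2 e20.
  exists (Num.min d1 d2); first by rewrite lt_min d10 d20.
  move=> z; rewrite lt_min => /andP[z1 z2].
  have := H1 z z1; have := H2 z z2.
  have -> : f w - f z = (f1 w - f1 z) - (f2 w - f2 z) by rewrite /f; ring.
  move=> h2 h1; apply: le_lt_trans (ler_normB _ _) _; lra.
have Ga : (g w <= (zeta - f w)%:E)%E.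
  apply/lee_addgt0Pr => e e0; rewrite -EFinD.
  set c := zeta - f w + e.
  suff Hc : closure [set p : 'rV[R]_n * R | (g p.1 <= p.2%:E)%E] (w, c).
    by rewrite -(proj1 (closure_id _) gcl) in Hc.
  move=> B hB.
  case: hB => [[U V] [hU hV] hUV].
  have [r r0 hr] := nb_enorm hU.
  have e20 : 0 < e / 2 by rewrite divr_gt0.
  have zlt : zeta < zeta + e / 2 by rewrite ltrDl.
  have [N1 _ hN1] := cvgr_lt zeta Frcvg (zeta + e / 2) zlt.
  have [dd dd0 hdd] := fcont _ e20.
  have m0 : 0 < Num.min r dd by rewrite lt_min r0 dd0.
  have [k [hk hxk]] := cl_enorm hw N1 m0.
  move: hxk; rewrite lt_min => /andP[hxr hxd].
  exists (x k, c); split; last first.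
    by apply: hUV; split => //=; [exact: hr | exact: nbhs_singleton].
  rewrite /= gE lee_fin.
  have h1 := hN1 k hk; have h2 := hdd _ hxd.
  move: h2; rewrite ltr_norml => /andP[h2 h3].
  move: h1; rewrite /Fr /c /f in h2 h3 *; lra.
rewrite /F -/(f w).
apply/le_anti/andP; split.
  apply: le_trans (leeD2l _ Ga) _.
  by rewrite -EFinD lee_fin addrC subrK.
case Egw: (g w) => [gw| |]; last by have := gpr w; rewrite Egw.
  2: by rewrite leey.
rewrite -EFinD lee_fin.
apply: (small_lim (C:=1)) => // e e0 e1.
rewrite mulr1.
pose Gw := G1 w - G2 w.
pose M0 := 4 * L + enorm Gw + 2 * (L + l) + 1.
have M00 : 0 < M0 by rewrite /M0; have := enorm_ge0 Gw; lra.
have e40 : 0 < e / 4 by rewrite divr_gt0.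
have [dd dd0 hdd] := fcont _ e40.
pose eta := Num.min 1 (Num.min (dd / 2) (e / (8 * M0))).
have eta0 : 0 < eta by rewrite /eta !lt_min ltr01 !divr_gt0 // mulr_gt0.
have eta1 : eta <= 1 by rewrite /eta ge_min lexx.
have eta2 : eta <= dd / 2 by rewrite /eta !ge_min lexx orbT.
have eta3 : eta <= e / (8 * M0) by rewrite /eta !ge_min lexx !orbT.
have zlt : zeta - e / 4 < zeta by rewrite ltrBlDr ltrDl.
have [N1 _ hN1] := cvgr_gt zeta Frcvg (zeta - e / 4) zlt.
have eta20 : (0 : R) < eta ^+ 2 by rewrite exprn_gt0.
have [N2 _ hN2] := cvgr_lt 0 Dcvg (eta ^+ 2) eta20.
have [k [hk hxk]] := cl_enorm hw (maxn N1 N2) eta0.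
move: hk; rewrite geq_max => /andP[hk1 hk2].
have hD1 : enorm (x k.+1 - x k) < eta.
  have := hN2 k.+1 (leqW hk2); rewrite /D /= => h.
  have := enorm_ge0 (x k.+1 - x k); nra.
have hD0 : enorm (x k - x k.-1) < eta.
  have := hN2 k hk2; rewrite /D /= => h.
  have := enorm_ge0 (x k - x k.-1); nra.
have hF1 := hN1 k.+1 (leqW hk1).
have Li : 0 < L^-1 by rewrite invr_gt0.
have [gp [hgp hv]] := prox_var Li gpr gcv (hprox k) Egw.
have egp : gp = gv k.+1 by rewrite /gv hgp.
rewrite egp in hv.
set p := x k.+1 in hv hD1 hF1 egp.
set y := extrap x beta k in hv.
set d := G1 y - G2 y in hv.
have hv2 : gv k.+1 <= gw + dotv (L *: (p - y) + d) (w - p).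
  have := ler_wpM2l (ltW L0) hv.
  rewrite mulrDr !mulrA mulfV ?gt_eqF // !mul1r -dotvZl.
  by rewrite opprB scalerDr scalerBr scalerA mulfV ?gt_eqF // scale1r scalerBr [d - _]addrC addrA.
have hCS := CS (L *: (p - y) + d) (w - p).
have s1 : s <= 1.
  have h1 : L / (L + l) <= 1 by rewrite ler_pdivrMr // mul1r; lra.
  have : 0 <= s by exact: sqrtr_ge0.
  rewrite -s2 in h1; nra.
have hbk : 0 <= beta k <= 1.
  by case/andP: (hb k) => -> h; rewrite (le_trans h) // (le_trans (ltW hsup)).
have hyx : enorm (y - x k) <= eta.
  rewrite /y /extrap addrAC subrr add0r enormZ ger0_norm; last by case/andP: hbk.
  case/andP: hbk => hb0 hb1.
  have := enorm_ge0 (x k - x k.-1); nra.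
have hpw := enorm_tri p (x k) w.
have hpy := enorm_tri p (x k) y.
have hyw := enorm_tri y (x k) w.
rewrite (enormB (x k) y) in hpy.
have hdG : enorm (d - Gw) <= L * enorm (y - w) + l * enorm (y - w).
  have -> : d - Gw = (G1 y - G1 w) - (G2 y - G2 w).
    by rewrite /d /Gw !opprD !opprK addrACA.
  apply: le_trans (enormBle _ _) _; apply: lerD; [exact: hL1 | exact: hL2].
have hd := enorm_tri d Gw 0.
rewrite !subr0 in hd.
have hu := enormD (L *: (p - y)) d.
rewrite enormZ gtr0_norm // in hu.
have hpw2 : enorm (p - w) < 2 * eta by lra.
have hpwd : enorm (p - w) < dd by lra.
have hf := hdd p hpwd.
move: hf; rewrite ltr_norml => /andP[hfa hfb].
have hU : enorm (L *: (p - y) + d) <= M0.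
  have hyw2 : enorm (y - w) <= 2 * eta by lra.
  have hpy2 : enorm (p - y) <= 2 * eta by lra.
  have := enorm_ge0 Gw.
  rewrite /M0; nra.
have hWp : enorm (w - p) <= 2 * eta by rewrite enormB; lra.
have hprod : enorm (L *: (p - y) + d) * enorm (w - p) <= M0 * (2 * eta).
  by apply: ler_pM => //; exact: enorm_ge0.
have hMe : M0 * eta <= e / 8.
  by move: eta3; rewrite ler_pdivlMr ?mulr_gt0 // => h; lra.
move: hF1; rewrite /Fr -/p /f in hfa hfb *.
lra.
Unshelve. all: by end_near.
Qed.
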